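(* If $\mathcal C_1$ and $\mathcal C_2$ are Baker classes, then $\mathcal C_1\oplus\mathcal C_2$ is a Baker class.
   Context: A layering of a graph $G$ is a function $\lambda:V(G)\to\mathbb{Z}$ with $|\lambda(u)-\lambda(v)|\le1$ for every edge $uv$. An ordered graph is a finite graph with a linear ordering of its vertices; subgraphs inherit the restricted ordering. For an infinite sequence $\mathbf r=r_1,r_2,\dots$ of positive integers and an integer $s\ge0$, let $\mathrm{tail}_s(\mathbf r)=r_{s+1},r_{s+2},\dots$, $\mathrm{tail}(\mathbf r)=\mathrm{tail}_1(\mathbf r)$ and $\mathrm{head}(\mathbf r)=r_1$. The Baker game between Destroyer and Preserver has states $(G,\mathbf r)$ with $G$ an ordered graph and $\mathbf r$ an infinite sequence of positive integers. If $V(G)=\emptyset$ the game stops. Otherwise, in one round Destroyer chooses either Delete (the smallest vertex $v$ of $G$ is removed and the game proceeds to $(G-v,\mathrm{tail}(\mathbf r))$) or Restrict (Destroyer chooses a layering $\lambda$ of $G$, Preserver chooses an interval $I$ of at most $\mathrm{head}(\mathbf r)$ consecutive integers, and the game proceeds to $(G[\lambda^{-1}(I)],\mathrm{tail}(\mathbf r))$). Destroyer wins on $(G,\mathbf r)$ in $t$ rounds if he has a strategy such that, regardless of Preserver's choices, the game stops after at most $t$ rounds. A class $\mathcal C$ of ordered graphs is a Baker class if for every infinite sequence $\mathbf r$ of positive integers there is an integer $t$ such that for every $G\in\mathcal C$, Destroyer wins the Baker game on $(G,\mathbf r)$ in $t$ rounds. For classes $\mathcal C_1,\mathcal C_2$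 of ordered graphs, $\mathcal C_1\oplus\mathcal C_2$ is the class of ordered graphs $G$ for which there exists a set $B\subseteq V(G)$ (a base) such that $G[B]\in\mathcal C_1$ and, for each component $C$ of $G-B$: $G[C]\in\mathcal C_2$, the set $K_C$ of vertices of $B$ having a neighbor in $C$ induces a clique, and every vertex of $K_C$ is smaller than every vertex of $C$. *)

(* Defs.v *)
From HB Require Import structures.
From mathcomp Require Import all_boot all_order all_algebra.
From Stdlib Require Import ClassicalDescription.
Set Implicit Arguments. Unset Strict Implicit. Unset Printing Implicit Defensive.
Import Order.TTheory GRing.Theory Num.Theory.

(* An ordered graph: a finite vertex set of natural-number labels (given by a
   sequence; only membership matters), ordered by the usual order on nat, and
   an adjacency relation.  Edges are symmetrised and loops are ignored, so an
   ordered graph is a finite simple graph with a linear order on its vertices. *)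
Record ograph := OGraph { verts : seq nat; adj : nat -> nat -> bool }.

Definition edge (G : ograph) (u v : nat) : bool :=
  [&& u \in verts G, v \in verts G, u != v & adj G u v || adj G v u].

Definition induced (G : ograph) (P : pred nat) : ograph :=
  OGraph [seq x <- verts G | P x] (adj G).

Definition layering (G : ograph) (lam : nat -> int) : Prop :=
  forall u v, edge G u v -> (`|lam u - lam v| <= 1)%R.

Definition tailseq (r : nat -> nat) : nat -> nat := fun i => r i.+1.
Definition headseq (r : nat -> nat) : nat := r 0.

(* Destroyer wins the Baker game on (G, r) in at most t rounds. *)
Fixpoint destroyer_wins (t : nat) (G : ograph) (r : nat -> nat) : Prop :=
  match t with
  | 0 => verts G = [::]
  | t'.+1 =>
      verts G = [::]
      \/
         (exists v, v \in verts G /\ (forall u, u \in verts G -> v <= u) /\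
            destroyer_wins t' (induced G (fun x => x != v)) (tailseq r))
      \/ (* Restrict: Destroyer picks a layering, Preserver any interval
            {a, a+1, ..., a+k-1} with k <= head r *)
         (exists lam : nat -> int, layering G lam /\
            forall (a : int) (k : nat), k <= headseq r ->
              destroyer_wins t'
                (induced G (fun x => (a <= lam x)%R && (lam x < a + k%:Z)%R))
                (tailseq r))
  end.

Definition ograph_class := ograph -> Prop.

Definition baker_class (C : ograph_class) : Prop :=
  forall r : nat -> nat, (forall i, 0 < r i) ->
    exists t : nat, forall G, C G -> destroyer_wins t G r.

Definition connected_in (H : ograph) (x y : nat) : Prop :=
  exists p : seq nat, path (edge H) x p /\ last x p = y.

Definition connectedb (H : ograph) (x : nat) : pred nat :=
  fun y => if excluded_middle_informative (connected_in H x y) then true else false.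

Definition oplus (C1 C2 : ograph_class) : ograph_class := fun G =>
  exists B : pred nat,
    C1 (induced G B) /\
    let H := induced G (predC B) in
    forall x, x \in verts H ->
      let C := connectedb H x in
      let K := fun b => [/\ b \in verts G, B b & exists2 c, C c & edge G b c] in
      [/\ C2 (induced G C),
          (forall b1 b2, K b1 -> K b2 -> b1 != b2 -> edge G b1 b2) &
          (forall b c, K b -> c \in verts H -> C c -> b < c)].

(* Main.v *)
Require Import Defs.
From HB Require Import structures.
From mathcomp Require Import all_boot all_order all_algebra zify.
From Stdlib Require Import ClassicalDescription FunctionalExtensionality.
Set Implicit Arguments. Unset Strict Implicit. Unset Printing Implicit Defensive.
Import Order.TTheory GRing.Theory Num.Theory.

Lemma sub_nil (s : seq nat) : {subset s <= [::]} -> s = [::].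
Proof. case: s => // x s H; have := H x; rewrite inE eqxx => /(_ isT). by []. Qed.

Lemma wins_nil t G r : verts G = [::] -> destroyer_wins t G r.
Proof. by case: t => [|t] //= ->; left. Qed.

Lemma edge_sub G G' u v : adj G' = adj G -> {subset verts G' <= verts G} ->
  edge G' u v -> edge G u v.
Proof.
move=> Ha Hs /and4P [Hu Hv Huv Hadj]; apply/and4P; split => //; try by apply: Hs.
by rewrite -Ha.
Qed.

Lemma mono t : forall G r G' r' t', destroyer_wins t G r -> t <= t' ->
  adj G' = adj G -> {subset verts G' <= verts G} -> (forall i, r' i <= r i) ->
  destroyer_wins t' G' r'.
Proof.
elim: t => [|t IH] G r G' r' t' /=.
  move=> H0 _ _ Hs _; apply: wins_nil; apply: sub_nil; by rewrite -H0.
case: t' => [|t'] //= W Ht Ha Hs Hr.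
case: W => [H0|[[v [Hv [Hmin W]]]|[lam [Hl W]]]].
- left; apply: sub_nil; by rewrite -H0.
- case Hv': (v \in verts G').
  + right; left; exists v; split => //; split.
      by move=> u Hu; apply: Hmin; apply: Hs.
    apply: (IH _ _ _ _ _ W) => //; last by move=> i; apply: Hr.
    move=> x /=.
    by rewrite !mem_filter => /andP [-> Hx]; rewrite Hs.
  + right; right; exists (fun _ => 0%R); split.
      by move=> u w _; rewrite subrr normr0.
    move=> a k Hk; apply: (IH _ _ _ _ _ W) => //; last by move=> i; apply: Hr.
    move=> x /=.
    rewrite !mem_filter => /andP [_ Hx]; rewrite (Hs _ Hx) andbT.
    by apply/eqP => Exv; move: Hx; rewrite Exv Hv'.
- right; right; exists lam; split.
    by move=> u w Huw; apply: Hl; apply: edge_sub Huw.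
  move=> a k Hk; apply: (IH _ _ _ _ _ (W a k _)) => //.
  - by apply: leq_trans Hk (Hr 0).
  - by move=> x /=; rewrite !mem_filter => /andP [-> /Hs].
  - by move=> i; apply: Hr.
Qed.

Definition dec (P : Prop) : bool := if excluded_middle_informative P then true else false.
Lemma decbP P : reflect P (dec P).
Proof. by rewrite /dec; case: excluded_middle_informative => h; constructor. Qed.

Lemma edge_sym G u v : edge G u v = edge G v u.
Proof. by rewrite /edge; case: (u \in _); case: (v \in _); rewrite //= eq_sym orbC. Qed.

Lemma conn_refl H x : connected_in H x x.
Proof. by exists [::]. Qed.

Lemma conn_sym H x y : connected_in H x y -> connected_in H y x.
Proof.
case=> p [Hp <-]; exists (rev (belast x p)); split.
  rewrite rev_path; move: Hp; apply: sub_path => u v /=; by rewrite edge_sym.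
case: p {Hp} => [|z p] //=; by rewrite rev_cons last_rcons.
Qed.

Lemma conn_trans H x y z : connected_in H x y -> connected_in H y z -> connected_in H x z.
Proof.
case=> p [Hp Ep] [q [Hq Eq]]; exists (p ++ q); split.
  by rewrite cat_path Hp Ep.
by rewrite last_cat Ep.
Qed.

Lemma connb_eq H x y : connectedb H x y -> connectedb H x = connectedb H y.
Proof.
move/decbP => Hxy; apply: functional_extensionality => z.
apply/decbP/decbP => Hz.
  exact: conn_trans (conn_sym Hxy) Hz.
exact: conn_trans Hxy Hz.
Qed.

Lemma connb_refl H x : connectedb H x x.
Proof. apply/decbP; exact: conn_refl. Qed.
Lemma connbP H x y : reflect (connected_in H x y) (connectedb H x y).
Proof. by rewrite /connectedb; case: excluded_middle_informative => h; constructor. Qed.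

Lemma mem_ind G P x : (x \in verts (induced G P)) = P x && (x \in verts G).
Proof. by rewrite /= mem_filter. Qed.

Lemma edge_ind G P u v : edge (induced G P) u v = [&& P u, P v & edge G u v].
Proof.
rewrite /edge !mem_ind /=.
by case: (P u); case: (P v); rewrite /= ?andbF.
Qed.

Lemma wins_ext t G r G' : destroyer_wins t G r -> adj G' = adj G ->
  {subset verts G' <= verts G} -> destroyer_wins t G' r.
Proof. move=> W Ha Hs; exact: (mono W (leqnn t) Ha Hs (fun i => leqnn _)). Qed.

Section Main.
Variables (G0 : ograph) (B0 : pred nat) (t2 : nat) (R : nat -> nat).

Definition H0 := induced G0 (predC B0).
Definition comp x := connectedb H0 x.
Definition K x b := [/\ b \in verts G0, B0 b & exists2 c, comp x c & edge G0 b c].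

Hypothesis HC2 : forall x, x \in verts H0 -> destroyer_wins t2 (induced G0 (comp x)) R.
Hypothesis Hcl : forall x, x \in verts H0 -> forall b1 b2, K x b1 -> K x b2 -> b1 != b2 -> edge G0 b1 b2.
Hypothesis Hord : forall x, x \in verts H0 -> forall b c, K x b -> c \in verts H0 -> comp x c -> b < c.

Definition Kp (Y : pred nat) v b := [/\ Y b, b \in verts G0, B0 b & exists2 c, comp v c & edge G0 b c].
Definition att Y v := dec (exists b, Kp Y v b).
Definition idx v := find (comp v) (verts G0).
Definition lsep (r0 : nat) (X : pred nat) v : int :=
  if B0 v || att X v then 0%R else Posz (r0 * (idx v).+1).
Definition bstar Y v := nth 0 [seq b <- verts G0 | dec (Kp Y v b)] 0.
Definition lext Y (lam : nat -> int) v := if B0 v then lam v else lam (bstar Y v).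
Definition Inv (Y : pred nat) := forall y, y \in verts G0 -> Y y -> ~~ B0 y -> exists b, Kp Y y b.

Lemma inH0 v : v \in verts G0 -> ~~ B0 v -> v \in verts H0.
Proof. by move=> Hv Hb; rewrite /H0 mem_ind /= Hb. Qed.

Lemma comp_edge u v : u \in verts G0 -> v \in verts G0 -> ~~ B0 u -> ~~ B0 v ->
  edge G0 u v -> comp u v.
Proof.
move=> Hu Hv Bu Bv E; apply/connbP; exists [:: v]; split => //=.
by rewrite andbT /H0 edge_ind /= Bu Bv E.
Qed.

Lemma comp_refl x : comp x x.
Proof. exact: connb_refl. Qed.

Lemma comp_eq x y : comp x y -> comp x = comp y.
Proof. exact: connb_eq. Qed.

Lemma idx_comp c y : y \in verts G0 -> idx y = idx c -> comp c y.
Proof.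
move=> Hy E.
have Hh : has (comp y) (verts G0) by apply/hasP; exists y => //; exact: comp_refl.
have := nth_find 0 Hh; rewrite -/(idx y) E => Hz.
have Hc : comp c (nth 0 (verts G0) (idx c)).
  apply: (@nth_find _ 0 (comp c)); by rewrite has_find -/(idx c) -E -has_find.
rewrite (comp_eq Hc) -(comp_eq Hz); exact: comp_refl.
Qed.

Lemma bstarP Y v : (exists b, b \in verts G0 /\ Kp Y v b) -> Kp Y v (bstar Y v).
Proof.
case=> b [Hb Kb]; rewrite /bstar.
have : has (fun b => dec (Kp Y v b)) (verts G0).
  by apply/hasP; exists b => //=; apply/decbP.
move=> Hh.
have : nth 0 [seq b <- verts G0 | dec (Kp Y v b)] 0 \in [seq b <- verts G0 | dec (Kp Y v b)].
  by apply: mem_nth; rewrite size_filter_gt0.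
by rewrite mem_filter => /andP [/decbP].
Qed.


Lemma att_edge (X : pred nat) u v : u \in verts G0 -> X u -> B0 u -> edge G0 u v -> att X v.
Proof.
move=> Hu Xu Bu E; apply/decbP; exists u; split => //; exists v => //; exact: comp_refl.
Qed.

Lemma lsep_edge r0 (X : pred nat) u v : u \in verts G0 -> v \in verts G0 -> X u -> X v ->
  edge G0 u v -> lsep r0 X u = lsep r0 X v.
Proof.
move=> Hu Hv Xu Xv E.
case Bu: (B0 u); case Bv: (B0 v).
- by rewrite /lsep Bu Bv.
- by rewrite /lsep Bu Bv (att_edge Hu Xu Bu E).
- by rewrite edge_sym in E; rewrite /lsep Bu Bv (att_edge Hv Xv Bv E).
- have := comp_eq (comp_edge Hu Hv (negbT Bu) (negbT Bv) E) => Ec.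
  by rewrite /lsep /att /idx /Kp Bu Bv Ec.
Qed.


Definition BP (Y : pred nat) := induced G0 (fun v => Y v && B0 v).
Definition MainS t := forall (X : pred nat) (r : nat -> nat), (forall i, 0 < r i) ->
  (forall n i, n <= t.*2.+1 -> r (n+i) <= R i) ->
  destroyer_wins t (BP X) (fun i => r (i.*2.+1)) -> destroyer_wins (t.*2.+1 + t2) (induced G0 X) r.
Definition InnerS t := forall (Y : pred nat) (r : nat -> nat), (forall i, 0 < r i) ->
  (forall n i, n <= t.*2 -> r (n+i) <= R i) -> Inv Y ->
  destroyer_wins t (BP Y) (fun i => r (i.*2)) -> destroyer_wins (t.*2 + t2) (induced G0 Y) r.

Lemma edge_in G u v : edge G u v -> u \in verts G /\ v \in verts G.
Proof. by case/and4P. Qed.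

Lemma main_of_inner t : InnerS t -> MainS t.
Proof.
move=> IN X r Hpos Hr W.
rewrite addSn /=; right; right; exists (lsep (r 0) X); split.
  move=> u v; rewrite edge_ind => /and3P [Xu Xv E].
  have [Hu Hv] := edge_in E.
  by rewrite (lsep_edge (r 0) Hu Hv Xu Xv E) subrr normr0.
move=> a k; rewrite /headseq => Hk.
case: (excluded_middle_informative (exists c, [/\ c \in verts G0, X c,
   (a <= lsep (r 0) X c)%R && (lsep (r 0) X c < a + Posz k)%R, ~~ B0 c & ~~ att X c]))
  => [[c [Hc Xc Ic Bc Ac]] | Hno].
- apply: (mono (HC2 (inH0 Hc Bc))).
  + exact: leq_addl.
  + reflexivity.
  + move=> y; rewrite !mem_ind /= => /andP [Iy /andP [Xy Hy]]; rewrite Hy andbT.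
    have Lc : lsep (r 0) X c = Posz (r 0 * (idx c).+1) by rewrite /lsep (negbTE Bc) (negbTE Ac).
    have r0c : r 0 <= r 0 * (idx c).+1 by rewrite leq_pmulr.
    move: Ic Iy; rewrite Lc => /andP [Ic1 Ic2] /andP [].
    rewrite /lsep; case: (B0 y || att X y) => Iy1 Iy2.
      exfalso; lia.
    apply: idx_comp => //.
    case: (ltngtP (idx y) (idx c)) => // Hlt; exfalso.
    * have : r 0 * (idx y).+1 + r 0 <= r 0 * (idx c).+1 by rewrite addnC -mulnS leq_mul2l ltnS Hlt orbT.
      lia.
    * have : r 0 * (idx c).+1 + r 0 <= r 0 * (idx y).+1 by rewrite addnC -mulnS leq_mul2l ltnS Hlt orbT.
      lia.
  + by move=> i; apply: (Hr 1 i).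
- set Y := fun v => X v && ((a <= lsep (r 0) X v)%R && (lsep (r 0) X v < a + Posz k)%R).
  apply: (@wins_ext _ (induced G0 Y)).
  + apply: IN.
    * by move=> i; apply: Hpos.
    * by move=> n i Hn; apply: (Hr n.+1 i); rewrite ltnS.
    * move=> y Hy /andP [Xy Iy] By.
      have Ay : att X y.
        apply/negPn/negP => nA; apply: Hno; exists y; split => //.
      case/decbP: (Ay) => b [Xb Hb Bb Ec]; exists b; split => //.
      rewrite /Y Xb /=.
      have -> : lsep (r 0) X b = lsep (r 0) X y by rewrite /lsep Bb Ay orbT.
      exact: Iy.
    * apply: (mono W) => //; try reflexivity; try (by move=> i; rewrite /tailseq doubleS).
      move=> x; rewrite !mem_ind /= => /andP [/andP [/andP [Xx _] Bx] Hx].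
      by rewrite Xx Bx Hx.
  + reflexivity.
  + by move=> x; rewrite !mem_ind /= => /andP [Ix /andP [Xx Hx]]; rewrite /Y Xx Ix Hx.
Qed.

Lemma lay_mix (Y : pred nat) lam u v : Inv Y -> layering (BP Y) lam ->
  u \in verts G0 -> v \in verts G0 -> Y u -> Y v -> B0 u -> ~~ B0 v -> edge G0 u v ->
  (`|lam u - lam (bstar Y v)| <= 1)%R.
Proof.
move=> HI Hl Hu Hv Yu Yv Bu Bv E.
have Kb : Kp Y v (bstar Y v).
  apply: bstarP; case: (HI v Hv Yv Bv) => b Kb; exists b; split => //; by case: Kb.
case: Kb => Yb Hb Bb Ec.
case: (eqVneq u (bstar Y v)) => [<- | ne]; first by rewrite subrr normr0.
apply: Hl; rewrite /BP edge_ind Yu Bu Yb Bb /=.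
apply: (Hcl (inH0 Hv Bv)) => //; split => //; exists v => //; exact: comp_refl.
Qed.

Lemma inner_gen t : (forall s, t = s.+1 -> MainS s) -> InnerS t.
Proof.
move=> IH Y r Hpos Hr HI W.
case Hh: (has (fun v => Y v && B0 v) (verts G0)); last first.
  apply: wins_nil; apply: sub_nil => y; rewrite mem_ind => /andP [Yy Hy].
  exfalso; case By: (B0 y).
  - by move/hasPn: Hh => /(_ y Hy); rewrite /= Yy By.
  - case: (HI y Hy Yy (negbT By)) => b [Yb Hb Bb _].
    by move/hasPn: Hh => /(_ b Hb); rewrite /= Yb Bb.
case/hasP: Hh => b0 Hb0 /andP [Yb0 Bb0].
have Hb0' : b0 \in verts (BP Y) by rewrite mem_ind Yb0 Bb0 Hb0.
case: t IH W Hr => [|s] IH W Hr.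
  by move: Hb0' W; rewrite /BP /= => H1 H2; rewrite H2 in H1.
have MS := IH s erefl.
rewrite doubleS addSn.
case: W => [W0 | [[b [Hb [Hmin W]]] | [lam [Hl W]]]].
- by move: Hb0'; rewrite W0.
- right; left; exists b.
  have /andP [/andP [Yb Bb] Hb1] : (Y b && B0 b) && (b \in verts G0) by move: Hb; rewrite mem_ind.
  split; first by rewrite mem_ind Yb Hb1.
  split.
    move=> u; rewrite mem_ind => /andP [Yu Hu].
    case Bu: (B0 u); first by apply: Hmin; rewrite mem_ind Yu Bu Hu.
    case: (HI u Hu Yu (negbT Bu)) => b' [Yb' Hb' Bb' Ec].
    have Hlt : b' < u.
      apply: (Hord (inH0 Hu (negbT Bu))) => //; last exact: comp_refl.
      exact: inH0 Hu (negbT Bu).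
    have : b <= b' by apply: Hmin; rewrite mem_ind Yb' Bb' Hb'.
    move=> Hbb; exact: ltnW (leq_ltn_trans Hbb Hlt).
  apply: (@wins_ext _ (induced G0 (fun v => Y v && (v != b)))).
  + apply: MS.
    * by move=> i; apply: Hpos.
    * move=> n i Hn; apply: (Hr n.+1 i); by rewrite doubleS ltnS.
    * apply: (mono W) => //; try reflexivity; try (by move=> i; rewrite /tailseq doubleS).
      - move=> x; rewrite !mem_ind /= => /andP [/andP [/andP [Yx nx] Bx] Hx].
        by rewrite nx Yx Bx Hx.
  + reflexivity.
  + move=> x; rewrite !mem_ind /= => /andP [nx /andP [Yx Hx]].
    by rewrite Yx nx Hx.
- right; right; exists (lext Y lam); split.
    move=> u v; rewrite edge_ind => /and3P [Yu Yv E]; have [Hu Hv] := edge_in E.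
    case Bu: (B0 u); case Bv: (B0 v).
    + rewrite /lext Bu Bv; apply: Hl; by rewrite /BP edge_ind Yu Bu Yv Bv E.
    + rewrite /lext Bu Bv; exact: (lay_mix HI Hl Hu Hv Yu Yv Bu (negbT Bv) E).
    + rewrite /lext Bu Bv distrC; rewrite edge_sym in E.
      exact: (lay_mix HI Hl Hv Hu Yv Yu Bv (negbT Bu) E).
    + have Ec := comp_eq (comp_edge Hu Hv (negbT Bu) (negbT Bv) E).
      by rewrite /lext Bu Bv /bstar /Kp Ec subrr normr0.
  move=> a k Hk.
  apply: (@wins_ext _ (induced G0 (fun v => Y v &&
     ((a <= lext Y lam v)%R && (lext Y lam v < a + Posz k)%R)))).
  + apply: MS.
    * by move=> i; apply: Hpos.
    * move=> n i Hn; apply: (Hr n.+1 i); by rewrite doubleS ltnS.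
    * apply: (mono (W a k Hk)) => //; try reflexivity; try (by move=> i; rewrite /tailseq doubleS).
      - move=> x; rewrite !mem_ind /= => /andP [/andP [/andP [Yx Ix] Bx] Hx].
        have El : lext Y lam x = lam x by rewrite /lext Bx.
        by rewrite -El Ix Yx Bx Hx.
  + reflexivity.
  + move=> x; rewrite !mem_ind /= => /andP [Ix /andP [Yx Hx]].
    by rewrite Yx Ix Hx.
Qed.

Lemma main_all t : MainS t.
Proof.
elim: t => [|t IH].
  apply: main_of_inner; apply: inner_gen => s; discriminate.
apply: main_of_inner; apply: inner_gen => s [<-]; exact: IH.
Qed.

End Main.


Theorem mainTheorem6 (C1 C2 : ograph_class) :
  baker_class C1 -> baker_class C2 -> baker_class (oplus C1 C2).
Proof.
move=> HC1 HC2 r Hpos.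
have [t1 Ht1] := HC1 (fun i => r (i.*2.+1)) (fun i => Hpos _).
pose R := fun i => \max_(n < t1.*2.+2) r (n + i).
have HR : forall n i, n <= t1.*2.+1 -> r (n + i) <= R i.
  move=> n i Hn; rewrite /R.
  have Hn' : n < t1.*2.+2 by [].
  have := @leq_bigmax _ (fun m : 'I_(t1.*2.+2) => r (m + i)) (Ordinal Hn'); exact.
have Rpos : forall i, 0 < R i.
  move=> i; apply: leq_trans (Hpos (0 + i)) (HR 0 i _); by [].
have [t2 Ht2] := HC2 R Rpos.
exists (t1.*2.+1 + t2) => G [B [HB1 Hop]].

have W : destroyer_wins (t1.*2.+1 + t2) (induced G (fun _ => true)) r.
  apply: (@main_all G B t2 R _ _ _ t1 (fun _ => true) r Hpos HR).
  - by move=> x Hx; case: (Hop x Hx) => Hc _ _; apply: Ht2.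
  - by move=> x Hx; case: (Hop x Hx).
  - by move=> x Hx; case: (Hop x Hx).
  - apply: (wins_ext (Ht1 _ HB1)); first reflexivity.
    by move=> x; rewrite !mem_ind /=.
apply: (wins_ext W); first reflexivity.
by move=> x Hx; rewrite mem_ind Hx.
Qed.
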